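(* Let $d\ge 2$, let $\varphi=\sum_{\bm{k}\in\mathbb{Z}^d}\varphi_{\bm{k}}z^{\bm{k}}\in L^\infty(\mathbb{T}^d)$, and let $C$ be a conjugation on $H^2(\mathbb{D}^d)$ with canonical factorization $C=UJ_{H^2(\mathbb{D}^d)}$ ($U$ unitary). For $\bm{k}\in\mathbb{Z}_+^d$ put $\tilde z^{\bm{k}}:=Cz^{\bm{k}}=Uz^{\bm{k}}$. The following are equivalent: (1) $T_\varphi$ is $C$-symmetric; (2) $\varphi_{\bm{k}-\bm{l}}=\langle T_\varphi\tilde z^{\bm{k}},\tilde z^{\bm{l}}\rangle$ for all $\bm{k},\bm{l}\in\mathbb{Z}_+^d$; (3) $\varphi_{\bm{k}-\bm{l}}=\langle U^*T_\varphi Uz^{\bm{k}},z^{\bm{l}}\rangle$ for all $\bm{k},\bm{l}\in\mathbb{Z}_+^d$.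
   Context: A conjugation is an anti-linear, involutive ($C^2=I$), isometric map on a Hilbert space; $T$ is $C$-symmetric if $CT^*C=T$. $H^2(\mathbb{D}^d)$ is the Hardy space over the unit polydisc $\mathbb{D}^d$, identified with the closed subspace of $L^2(\mathbb{T}^d)$ spanned by the monomials $z^{\bm{k}}=z_1^{k_1}\cdots z_d^{k_d}$, $\bm{k}\in\mathbb{Z}_+^d$, which form its canonical orthonormal basis; inner products are linear in the first entry. For $\varphi\in L^\infty(\mathbb{T}^d)$, $T_\varphi f=P_{H^2(\mathbb{D}^d)}(\varphi f)$. The canonical conjugation is $J_{H^2(\mathbb{D}^d)}(\sum_{\bm{k}}a_{\bm{k}}z^{\bm{k}})=\sum_{\bm{k}}\bar a_{\bm{k}}z^{\bm{k}}$, and the canonical factorization of a conjugation $C$ is the unique factorization $C=UJ_{H^2(\mathbb{D}^d)}$ with $U$ unitary. (In the paper, condition (2) is written as $\varphi_{\bm{k}-\bm{l}}=\tilde\varphi_{\bm{l}-\bm{k}}$ with the notation $\tilde\varphi_{\bm{l}-\bm{k}}:=\langle T_\varphi\tilde z^{\bm{k}},\tilde z^{\bm{l}}\rangle$.) *)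

(* Defs.v *)
From mathcomp Require Import all_boot all_order all_algebra.
From mathcomp Require Import all_classical all_reals.
From mathcomp Require Import complex.

Set Implicit Arguments.
Unset Strict Implicit.
Unset Printing Implicit Defensive.
Import Order.TTheory GRing.Theory Num.Theory.
Local Open Scope ring_scope.

Section HardyDefs.
Variable R : realType.
Local Notation C := (R[i]).

Section Sums.
Variable I : choiceType.

Definition has_sum (F : I -> C) (s : C) : Prop :=
  forall e : R, 0 < e -> exists F0 : seq I, forall S : seq I,
    uniq S -> {subset F0 <= S} -> `| \sum_(i <- S) F i - s | < (e%:C)%C.

(* the value of the sum (0 if the family is not summable) *)
Definition sumv (F : I -> C) : C := xget 0 [set s | has_sum F s].

Definition l2 (f : I -> C) : Prop := exists s, has_sum (fun k => f k * (f k)^*) s.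

Definition ip (f g : I -> C) : C := sumv (fun k => f k * (g k)^*).

Definition lc (a : C) (f g : I -> C) : I -> C := fun k => a * f k + g k.
End Sums.

Definition mind (d : nat) := {ffun 'I_d -> nat}.
Definition zind (d : nat) := {ffun 'I_d -> int}.

Definition mdiff d (k l : mind d) : zind d := [ffun i => (k i)%:Z - (l i)%:Z].
Definition zdiff d (m n : zind d) : zind d := [ffun i => m i - n i].

(* H^2(D^d), identified (via the canonical orthonormal basis z^k) with
   l^2(Z_+^d): an element f is its family of Taylor coefficients. *)
Definition Hfun d := mind d -> C.
Definition H2 d (f : Hfun d) : Prop := l2 f.

Definition mono d (k : mind d) : Hfun d := fun m => (m == k)%:R.

Definition Jcan d (f : Hfun d) : Hfun d := fun k => (f k)^*.

(* Fourier coefficients of phi * f, for f in L^2(T^d) (coefficients in l^2(Z^d)) *)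
Definition laurent d (phi : zind d -> C) (f : zind d -> C) : zind d -> C :=
  fun m => sumv (fun n => phi (zdiff m n) * f n).

(* phi = (phi_k)_{k in Z^d} is the Fourier coefficient family of a function in
   L^oo(T^d): multiplication by phi is a bounded operator on L^2(T^d) = l^2(Z^d). *)
Definition Linf_coeffs d (phi : zind d -> C) : Prop :=
  exists M : R, forall f : zind d -> C, l2 f ->
    l2 (laurent phi f) /\ ip (laurent phi f) (laurent phi f) <= (M%:C)%C * ip f f.

(* Toeplitz operator T_phi f = P_{H^2}(phi f):
   (T_phi f)_l = sum_{k in Z_+^d} phi_{l-k} f_k *)
Definition toeplitz d (phi : zind d -> C) (f : Hfun d) : Hfun d :=
  fun l => sumv (fun k => phi (mdiff l k) * f k).

Definition maps_H2 d (T : Hfun d -> Hfun d) : Prop := forall f, H2 f -> H2 (T f).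

Definition linear_H2 d (T : Hfun d -> Hfun d) : Prop :=
  forall a f g, H2 f -> H2 g -> T (lc a f g) = lc a (T f) (T g).

Definition antilinear_H2 d (T : Hfun d -> Hfun d) : Prop :=
  forall a f g, H2 f -> H2 g -> T (lc a f g) = lc a^* (T f) (T g).

Definition conjugation d (Cj : Hfun d -> Hfun d) : Prop :=
  [/\ maps_H2 Cj, antilinear_H2 Cj,
      (forall f, H2 f -> Cj (Cj f) = f)
    & (forall f, H2 f -> ip (Cj f) (Cj f) = ip f f)].

Definition unitary d (U : Hfun d -> Hfun d) : Prop :=
  [/\ maps_H2 U, linear_H2 U,
      (forall f g, H2 f -> H2 g -> ip (U f) (U g) = ip f g)
    & (forall g, H2 g -> exists2 f, H2 f & U f = g)].

Definition is_adjoint d (T S : Hfun d -> Hfun d) : Prop :=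
  maps_H2 S /\ forall f g, H2 f -> H2 g -> ip (T f) g = ip f (S g).

Definition C_symmetric d (Cj T : Hfun d -> Hfun d) : Prop :=
  exists2 S, is_adjoint T S & forall f, H2 f -> Cj (S (Cj f)) = T f.

End HardyDefs.

(* Main.v *)
Require Import Defs.
From mathcomp Require Import all_boot all_order all_algebra.
From mathcomp Require Import all_classical all_reals.
From mathcomp Require Import complex.
From mathcomp Require Import ring lra.
Import Order.TTheory GRing.Theory Num.Theory.
Local Open Scope ring_scope.

Module HelpersTh.
Set Implicit Arguments.
Unset Strict Implicit.
Unset Printing Implicit Defensive.


Section Norms.
Variable R : realType.
Local Notation C := (R[i]).
Local Notation cr x := (((x : R)%:C)%C : C).
Implicit Types x y : C.

Definition nr x : R := complex.Re `|x|.

Lemma normE x : `|x| = cr (nr x).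
Proof. rewrite /nr normc_def /=; reflexivity. Qed.

Lemma nr_ge0 x : 0 <= nr x.
Proof. by rewrite -(lecR 0 (nr x)) -normE; exact: normr_ge0. Qed.

Lemma nrD x y : nr (x + y) <= nr x + nr y.
Proof. by rewrite -lecR rmorphD /= -!normE; exact: ler_normD. Qed.

Lemma nrM x y : nr (x * y) = nr x * nr y.
Proof. by apply: complexI; rewrite rmorphM /= -!normE normrM. Qed.

Lemma nrN x : nr (- x) = nr x.
Proof. by rewrite /nr normrN. Qed.

Lemma nrJ x : nr (x^*) = nr x.
Proof. by rewrite /nr norm_conjC. Qed.

Lemma nr0 : nr 0 = 0.
Proof. by rewrite /nr normr0. Qed.

Lemma nr_eq0 x : (nr x == 0) = (x == 0).
Proof.
by rewrite -[RHS]normr_eq0 normE; apply/eqP/eqP => [->|[]].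
Qed.

Lemma nr_real (a : R) : nr (cr a) = `|a|.
Proof.
rewrite /nr normc_def /= expr0n /= addr0 sqrtr_sqr //.
Qed.

Lemma mulJ x : x * x^* = cr (nr x ^+ 2).
Proof. by rewrite -normCK normE rmorphXn. Qed.

Lemma Re_le x : `|complex.Re x| <= nr x.
Proof.
rewrite /nr normc_def /= -sqrtr_sqr.
by apply: ler_wsqrtr; rewrite lerDl sqr_ge0.
Qed.

Lemma Im_le x : `|complex.Im x| <= nr x.
Proof.
rewrite /nr normc_def /= -sqrtr_sqr.
by apply: ler_wsqrtr; rewrite lerDr sqr_ge0.
Qed.

Lemma ltC_nr x (e : R) : (`|x| < cr e) = (nr x < e).
Proof. by rewrite normE ltcR. Qed.

Lemma nr_sum (I : Type) (S : seq I) (F : I -> C) :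
  nr (\sum_(i <- S) F i) <= \sum_(i <- S) nr (F i).
Proof.
elim: S => [|a S IH]; first by rewrite !big_nil nr0.
rewrite !big_cons; apply: le_trans (nrD _ _) _; exact: lerD.
Qed.

Lemma nr_small x : (forall e : R, 0 < e -> nr x < e) -> x = 0.
Proof.
move=> H; apply/eqP; rewrite -nr_eq0; apply/negPn/negP => hx.
have := H (nr x); rewrite lt_def hx nr_ge0 => /(_ isT).
by rewrite ltxx.
Qed.

Lemma amgm (a b t : R) : 0 < t -> a * b <= (t * a ^+ 2 + b ^+ 2 / t) / 2.
Proof.
move=> t0.
have h : 0 <= (t * a - b) ^+ 2 / t by rewrite divr_ge0 ?sqr_ge0 ?ltW.
rewrite ler_pdivlMr ?ltr0n //.
have e : (t * a - b) ^+ 2 / t = t * a ^+ 2 + b ^+ 2 / t - a * b * 2.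
  by field; rewrite gt_eqF.
by rewrite e subr_ge0 in h.
Qed.

End Norms.


Section Sums.
Variable R : realType.
Local Notation C := (R[i]).
Local Notation cr x := (((x : R)%:C)%C : C).
Variable I : choiceType.
Implicit Types (F G : I -> C) (S : seq I).

Lemma hsP F s : has_sum F s <-> forall e : R, 0 < e -> exists F0 : seq I,
  forall S, uniq S -> {subset F0 <= S} -> nr (\sum_(i <- S) F i - s) < e.
Proof.
rewrite /has_sum; split=> H e /H [F0 HF]; exists F0 => S uS sS.
  by rewrite -ltC_nr; apply: HF.
by rewrite ltC_nr; apply: HF.
Qed.

Lemma sum_perm_mem (T : eqType) (A B : seq T) (H : T -> C) :
  uniq A -> uniq B -> A =i B -> \sum_(i <- A) H i = \sum_(i <- B) H i.
Proof. by move=> uA uB AB; apply: perm_big; apply: uniq_perm. Qed.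

Lemma sum_perm_memR (T : eqType) (A B : seq T) (H : T -> R) :
  uniq A -> uniq B -> A =i B -> \sum_(i <- A) H i = \sum_(i <- B) H i.
Proof. by move=> uA uB AB; apply: perm_big; apply: uniq_perm. Qed.

Lemma sum_sub (T : eqType) (A B : seq T) (H : T -> C) :
  uniq A -> uniq B -> {subset A <= B} ->
  \sum_(i <- B | i \in A) H i = \sum_(i <- A) H i.
Proof.
move=> uA uB AB; rewrite -big_filter; apply: sum_perm_mem => //.
  exact: filter_uniq.
by move=> x; rewrite mem_filter; case: (boolP (x \in A)) => // /AB ->.
Qed.

Lemma sum_subR (T : eqType) (A B : seq T) (H : T -> R) :
  uniq A -> uniq B -> {subset A <= B} ->
  \sum_(i <- B | i \in A) H i = \sum_(i <- A) H i.
Proof.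
move=> uA uB AB; rewrite -big_filter; apply: sum_perm_memR => //.
  exact: filter_uniq.
by move=> x; rewrite mem_filter; case: (boolP (x \in A)) => // /AB ->.
Qed.

Lemma sum_mono (T : eqType) (A B : seq T) (H : T -> R) :
  (forall i, 0 <= H i) -> uniq A -> uniq B -> {subset A <= B} ->
  \sum_(i <- A) H i <= \sum_(i <- B) H i.
Proof.
move=> H0 uA uB AB; rewrite [X in _ <= X](bigID (mem A)) /= sum_subR //.
by rewrite lerDl sumr_ge0.
Qed.

Lemma hs_unique F s1 s2 : has_sum F s1 -> has_sum F s2 -> s1 = s2.
Proof.
move=> /hsP h1 /hsP h2; apply/eqP; rewrite -subr_eq0; apply/eqP.
apply: nr_small => e e0.
have e2 : 0 < e / 2 by rewrite divr_gt0.
have [F1 H1] := h1 _ e2; have [F2 H2] := h2 _ e2.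
set S := undup (F1 ++ F2).
have uS : uniq S by apply: undup_uniq.
have s1S : {subset F1 <= S} by move=> x hx; rewrite mem_undup mem_cat hx.
have s2S : {subset F2 <= S} by move=> x hx; rewrite mem_undup mem_cat hx orbT.
have := H1 S uS s1S; have := H2 S uS s2S.
set x := \sum_(i <- S) F i => a b.
have -> : s1 - s2 = (x - s2) - (x - s1) by ring.
apply: le_lt_trans (nrD _ _) _; rewrite nrN.
by have := ltrD a b; rewrite -splitr.
Qed.

Lemma sumvE F s : has_sum F s -> sumv F = s.
Proof.
move=> h; rewrite /sumv; apply: (hs_unique _ h).
by have := @xgetPex _ 0 [set s | has_sum F s] (ex_intro _ s h).
Qed.

Lemma sumv0 F : (forall s, ~ has_sum F s) -> sumv F = 0.
Proof. by move=> h; rewrite /sumv; apply: xgetPN. Qed.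

Lemma hs_conj F s : has_sum F s -> has_sum (fun i => (F i)^*) s^*.
Proof.
move=> /hsP h; apply/hsP => e /h [F0 HF]; exists F0 => S uS sS.
by rewrite -rmorph_sum -rmorphB nrJ; apply: HF.
Qed.

Lemma sumv_conj F : sumv (fun i => (F i)^*) = (sumv F)^*.
Proof.
case: (pselect (exists s, has_sum F s)) => [[s hs]|hn].
  by rewrite (sumvE hs) (sumvE (hs_conj hs)).
rewrite !sumv0 ?conjC0 // => s hs; apply: hn.
  by exists s.
exists s^*; have := hs_conj hs.
by under eq_fun do rewrite conjCK.
Qed.

Lemma hs_fin F S0 : uniq S0 -> (forall i, i \notin S0 -> F i = 0) ->
  has_sum F (\sum_(i <- S0) F i).
Proof.
move=> u0 h; apply/hsP => e e0; exists S0 => S uS sS.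
rewrite [X in X - _](bigID (mem S0)) /= sum_sub //.
by rewrite [X in _ + X - _]big1 ?addr0 ?subrr ?nr0 // => i /h.
Qed.

Lemma hs_add F G s t : has_sum F s -> has_sum G t ->
  has_sum (fun i => F i + G i) (s + t).
Proof.
move=> /hsP h1 /hsP h2; apply/hsP => e e0.
have e2 : 0 < e / 2 by rewrite divr_gt0.
have [F1 H1] := h1 _ e2; have [F2 H2] := h2 _ e2.
exists (F1 ++ F2) => S uS sS.
have s1S : {subset F1 <= S} by move=> x hx; apply: sS; rewrite mem_cat hx.
have s2S : {subset F2 <= S} by move=> x hx; apply: sS; rewrite mem_cat hx orbT.
have a := H1 S uS s1S; have b := H2 S uS s2S.
rewrite big_split /=.
have -> : \sum_(i <- S) F i + \sum_(i <- S) G i - (s + t) =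
   (\sum_(i <- S) F i - s) + (\sum_(i <- S) G i - t) by ring.
apply: le_lt_trans (nrD _ _) _.
by have := ltrD a b; rewrite -splitr.
Qed.

Lemma hs_scale F s a : has_sum F s -> has_sum (fun i => a * F i) (a * s).
Proof.
move=> /hsP h; apply/hsP => e e0.
have a1 : 0 < nr a + 1 by rewrite ltr_wpDl ?nr_ge0.
have e1 : 0 < e / (nr a + 1) by rewrite divr_gt0.
have [F1 H1] := h _ e1; exists F1 => S uS sS.
rewrite -mulr_sumr -mulrBr nrM.
apply: (@le_lt_trans _ _ (nr a * (e / (nr a + 1)))).
  by rewrite ler_wpM2l ?nr_ge0 // ltW // H1.
rewrite mulrA ltr_pdivrMr // [nr a * e]mulrC.
by rewrite ltr_pM2l // ltrDl.
Qed.

Lemma hs_lc F G s t a : has_sum F s -> has_sum G t ->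
  has_sum (fun i => a * F i + G i) (a * s + t).
Proof. by move=> h1 h2; apply: hs_add => //; apply: hs_scale. Qed.

Lemma hs_ext F G s : (forall i, F i = G i) -> has_sum F s -> has_sum G s.
Proof. by move=> e; rewrite (funext e). Qed.

Lemma hs_nn_bounded (p : I -> R) (B : R) : (forall i, 0 <= p i) ->
  (forall S, uniq S -> \sum_(i <- S) p i <= B) ->
  exists2 s : R, has_sum (fun i => cr (p i)) (cr s) & s <= B.
Proof.
move=> p0 hB.
pose E := [set x : R | exists2 S, uniq S & x = \sum_(i <- S) p i]%classic.
have E0 : (E !=set0)%classic by exists 0; exists [::] => //; rewrite big_nil.
have EB : ubound E B by move=> x [S uS ->]; apply: hB.
have hE : has_sup E by split => //; exists B.
exists (sup E); last exact: ge_sup.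
apply/hsP => e e0.
have [x [S0 u0 ->] hx] := sup_adherent e0 hE.
exists S0 => S uS sS.
rewrite -rmorph_sum -rmorphB nr_real.
have h1 : \sum_(i <- S0) p i <= \sum_(i <- S) p i by apply: sum_mono.
have h2 : \sum_(i <- S) p i <= sup E by apply: sup_upper_bound => //; exists S.
rewrite ler0_norm ?subr_le0 //.
by rewrite opprB ltrBlDr -ltrBlDl; apply: lt_le_trans hx h1.
Qed.

Lemma hs_nn_le (p : I -> R) s : (forall i, 0 <= p i) ->
  has_sum (fun i => cr (p i)) s ->
  s = cr (complex.Re s) /\ forall S, uniq S -> \sum_(i <- S) p i <= complex.Re s.
Proof.
move=> p0 hs.
have hle : forall S, uniq S -> \sum_(i <- S) p i <= complex.Re s.
  move=> S uS; apply/ler_addgt0Pr => e e0.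
  have [F0 H0] := (hsP _ _).1 hs e e0.
  set S' := undup (S ++ F0).
  have uS' : uniq S' by apply: undup_uniq.
  have sub : {subset F0 <= S'} by move=> x hx; rewrite mem_undup mem_cat hx orbT.
  have hh := H0 S' uS' sub.
  have h1 : \sum_(i <- S) p i <= \sum_(i <- S') p i.
    by apply: sum_mono => // x hx; rewrite mem_undup mem_cat hx.
  apply: (le_trans h1).
  have := le_lt_trans (Re_le _) hh.
  rewrite -rmorph_sum raddfB /= => /ltr_normlP [_].
  by rewrite ltrBlDl => /ltW.
have [s' hs' _] := hs_nn_bounded p0 hle.
by have e := hs_unique hs hs'; subst s; split.
Qed.

Lemma ReN_le (x : C) : `|- complex.Re x| <= nr x.
Proof. by rewrite normrN; exact: Re_le. Qed.
Lemma ImN_le (x : C) : `|- complex.Im x| <= nr x.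
Proof. by rewrite normrN; exact: Im_le. Qed.

Lemma asum_hs F (B : R) :
  (forall S, uniq S -> \sum_(i <- S) nr (F i) <= B) ->
  exists s, has_sum F s /\ nr s <= B.
Proof.
move=> hB.
pose pp (x : R) := Num.max x 0.
have ppE : forall x : R, x = pp x - pp (- x).
  move=> x; rewrite /pp; case: (lerP 0 x) => hx.
    by rewrite (@max_r _ _ (- x) 0) ?subr0 // oppr_le0.
  by rewrite (@max_l _ _ (- x) 0) ?sub0r ?opprK // oppr_ge0 ltW.
have pp0 : forall x : R, 0 <= pp x by move=> x; rewrite /pp le_max lexx orbT.
have ppB : forall x : R, `|x| <= B -> pp x <= `|x|.
  by move=> x _; rewrite /pp ge_max normr_ge0 ler_norm.
have ppN : forall x : R, pp x <= `|x|.
  by move=> x; rewrite /pp ge_max normr_ge0 ler_norm.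
have bnd : forall (q : I -> R), (forall i, 0 <= q i) ->
    (forall i, q i <= nr (F i)) -> exists s : R, has_sum (fun i => cr (q i)) (cr s).
  move=> q q0 qF.
  have [s hs _] := @hs_nn_bounded q B q0 (fun S uS =>
      le_trans (ler_sum _ (fun i _ => qF i)) (hB S uS)).
  by exists s.
have [a1 h1] := bnd (fun i => pp (complex.Re (F i))) (fun i => pp0 _)
   (fun i => le_trans (ppN _) (Re_le _)).
have [a2 h2] := bnd (fun i => pp (- complex.Re (F i))) (fun i => pp0 _)
   (fun i => le_trans (ppN _) (ReN_le _)).
have [b1 h3] := bnd (fun i => pp (complex.Im (F i))) (fun i => pp0 _)
   (fun i => le_trans (ppN _) (Im_le _)).
have [b2 h4] := bnd (fun i => pp (- complex.Im (F i))) (fun i => pp0 _)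
   (fun i => le_trans (ppN _) (ImN_le _)).
have hRe := hs_lc (-1) h2 h1.
have hIm := hs_lc (-1) h4 h3.
have hF := hs_lc ('i%C) hIm hRe.
set s := (X in has_sum _ X) in hF.
have hFF : has_sum F s.
  apply: hs_ext hF => i.
  rewrite [RHS]complexE [complex.Re (F i) in RHS]ppE [complex.Im (F i) in RHS]ppE.
  by rewrite !rmorphB /=; ring.
exists s; split => //.
apply/ler_addgt0Pr => e e0.
have [F0 H0] := (hsP _ _).1 hFF e e0.
have sub : {subset F0 <= undup F0} by move=> x hx; rewrite mem_undup.
have hh := H0 (undup F0) (undup_uniq _) sub.
have := nrD (\sum_(i <- undup F0) F i) (s - \sum_(i <- undup F0) F i).
rewrite addrC subrK => h.
apply: (le_trans h); apply: lerD.
  by apply: le_trans (nr_sum _ _) (hB _ (undup_uniq _)).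
by rewrite -nrN opprB ltW.
Qed.

End Sums.


Section L2.
Variable R : realType.
Local Notation C := (R[i]).
Local Notation cr x := (((x : R)%:C)%C : C).
Variable I : choiceType.
Implicit Types (F G f g h : I -> C) (S : seq I).

Definition n2 f : R := complex.Re (ip f f).

Lemma l2P f : l2 f <-> exists B : R, forall S, uniq S ->
  \sum_(i <- S) nr (f i) ^+ 2 <= B.
Proof.
split.
  move=> [s hs].
  have hs' : has_sum (fun i => cr (nr (f i) ^+ 2)) s.
    by apply: hs_ext hs => i; rewrite mulJ.
  have [_ hb] := hs_nn_le (fun i => exprn_ge0 2 (nr_ge0 (f i))) hs'.
  by exists (complex.Re s).
move=> [B hB].
have [s hs _] := hs_nn_bounded (fun i => exprn_ge0 2 (nr_ge0 (f i))) hB.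
by exists (cr s); apply: hs_ext hs => i; rewrite mulJ.
Qed.

Lemma l2_n2 f : l2 f -> ip f f = cr (n2 f) /\
  (forall S, uniq S -> \sum_(i <- S) nr (f i) ^+ 2 <= n2 f).
Proof.
move=> [s hs].
have hs' : has_sum (fun i => cr (nr (f i) ^+ 2)) s.
  by apply: hs_ext hs => i; rewrite mulJ.
have [e hb] := hs_nn_le (fun i => exprn_ge0 2 (nr_ge0 (f i))) hs'.
by rewrite /n2 /ip (sumvE hs) -e; split.
Qed.

Lemma n2_ge0 f : l2 f -> 0 <= n2 f.
Proof. by move=> /l2_n2 [_ h]; have := h [::] isT; rewrite big_nil. Qed.

Lemma ip_bound f g (t : R) : l2 f -> l2 g -> 0 < t ->
  has_sum (fun k => f k * (g k)^*) (ip f g) /\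
  nr (ip f g) <= (t * n2 f + n2 g / t) / 2.
Proof.
move=> lf lg t0.
have [_ bf] := l2_n2 lf; have [_ bg] := l2_n2 lg.
have [s [hs hb]] : exists s, has_sum (fun k => f k * (g k)^*) s /\
    nr s <= (t * n2 f + n2 g / t) / 2.
  apply: asum_hs => S uS.
  apply: (@le_trans _ _ (\sum_(i <- S) (t * nr (f i) ^+ 2 + nr (g i) ^+ 2 / t) / 2)).
    by apply: ler_sum => i _; rewrite nrM nrJ; apply: amgm.
  rewrite -mulr_suml big_split /= -mulr_sumr -mulr_suml.
  rewrite ler_pM2r ?invr_gt0 ?ltr0n //.
  apply: lerD; first by rewrite ler_pM2l //; apply: bf.
  by rewrite ler_pM2r ?invr_gt0 //; apply: bg.
by rewrite /ip (sumvE hs).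
Qed.

Lemma ip_hs f g : l2 f -> l2 g -> has_sum (fun k => f k * (g k)^*) (ip f g).
Proof. by move=> lf lg; have [] := ip_bound lf lg ltr01. Qed.

Lemma l2_lc a f g : l2 f -> l2 g -> l2 (lc a f g).
Proof.
move=> lf lg; have [_ bf] := l2_n2 lf; have [_ bg] := l2_n2 lg.
apply/l2P; exists (2 * nr a ^+ 2 * n2 f + 2 * n2 g) => S uS.
apply: (@le_trans _ _ (\sum_(i <- S) (2 * nr a ^+ 2 * nr (f i) ^+ 2 + 2 * nr (g i) ^+ 2))).
  apply: ler_sum => i _; rewrite /lc.
  have h1 := nrD (a * f i) (g i); rewrite nrM in h1.
  have u0 := nr_ge0 a; have v0 := nr_ge0 (f i); have w0 := nr_ge0 (g i).
  have z0 := nr_ge0 (a * f i + g i).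
  set u := nr a in h1 u0 *; set v := nr (f i) in h1 v0 *; set w := nr (g i) in h1 w0 *.
  set z := nr _ in h1 z0 *.
  have hz : z ^+ 2 <= (u * v + w) ^+ 2.
    by rewrite ler_pXn2r // ?nnegrE // addr_ge0 // mulr_ge0.
  apply: (le_trans hz).
  have q : 0 <= (u * v - w) ^+ 2 by apply: sqr_ge0.
  rewrite sqrrB in q; rewrite sqrrD exprMn; lra.
rewrite big_split /= -!mulr_sumr.
apply: lerD; last by rewrite ler_pM2l ?ltr0n //; apply: bg.
by rewrite ler_wpM2l ?mulr_ge0 ?exprn_ge0 ?nr_ge0 //; apply: bf.
Qed.

Lemma ip_lcl a f g h : l2 f -> l2 g -> l2 h ->
  ip (lc a f g) h = a * ip f h + ip g h.
Proof.
move=> lf lg lh; rewrite {1}/ip; apply: sumvE.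
apply: hs_ext (hs_lc a (ip_hs lf lh) (ip_hs lg lh)) => i.
by rewrite /lc mulrDl mulrA.
Qed.

Lemma ip_sym f g : ip g f = (ip f g)^*.
Proof.
rewrite /ip -sumv_conj; congr sumv; apply: funext => i.
by rewrite rmorphM /= conjCK mulrC.
Qed.

Lemma ip_lcr a f g h : l2 f -> l2 g -> l2 h ->
  ip h (lc a f g) = a^* * ip h f + ip h g.
Proof.
move=> lf lg lh; rewrite ip_sym ip_lcl // rmorphD rmorphM /=.
by rewrite -(ip_sym f h) -(ip_sym g h).
Qed.

Lemma l2_fin f S0 : uniq S0 -> (forall i, i \notin S0 -> f i = 0) -> l2 f.
Proof.
move=> u0 h; exists (\sum_(i <- S0) (f i * (f i)^*)).
by apply: hs_fin => // i /h ->; rewrite mul0r.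
Qed.

Lemma sumv_single F k : (forall m, m != k -> F m = 0) -> sumv F = F k.
Proof.
move=> h; rewrite (sumvE (@hs_fin _ _ F [:: k] isT _)) ?big_seq1 // => i.
by rewrite inE => /h.
Qed.

Definition monoI (k : I) : I -> C := fun m => (m == k)%:R.

Lemma l2_mono k : l2 (monoI k).
Proof. by apply: (@l2_fin _ [:: k]) => // i; rewrite inE /monoI => /negbTE ->. Qed.

Lemma ip_mono_r f k : ip f (monoI k) = f k.
Proof.
rewrite /ip (sumv_single (k := k)) /monoI ?eqxx ?conjC1 ?mulr1 //.
by move=> m /negbTE ->; rewrite conjC0 mulr0.
Qed.

Lemma ip_mono_l f k : ip (monoI k) f = (f k)^*.
Proof. by rewrite ip_sym ip_mono_r. Qed.

Definition trunc S f : I -> C := fun m => if m \in S then f m else 0.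
Definition tail S f : I -> C := fun m => if m \in S then 0 else f m.

Lemma l2_trunc S f : uniq S -> l2 (trunc S f).
Proof. by move=> uS; apply: (@l2_fin _ S) => // i /negbTE; rewrite /trunc => ->. Qed.

Lemma tail_small f (d : R) : l2 f -> 0 < d ->
  exists S0, [/\ uniq S0, l2 (tail S0 f) & n2 (tail S0 f) <= d].
Proof.
move=> lf d0.
have [e1 bf] := l2_n2 lf.
have hs : has_sum (fun i => cr (nr (f i) ^+ 2)) (cr (n2 f)).
  by rewrite -e1; apply: hs_ext (ip_hs lf lf) => i; rewrite mulJ.
have d2 : 0 < d / 2 by rewrite divr_gt0.
have [F0 H0] := (hsP _ _).1 hs _ d2.
set S0 := undup F0.
have u0 : uniq S0 by apply: undup_uniq.
have s0 : {subset F0 <= S0} by move=> x; rewrite mem_undup.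
have hS0 := H0 S0 u0 s0.
rewrite -rmorph_sum -rmorphB nr_real in hS0.
have bnd : forall S, uniq S ->
    \sum_(i <- S) nr (tail S0 f i) ^+ 2 <= d.
  move=> S uS.
  set S2 := undup (S ++ S0).
  have u2 : uniq S2 by apply: undup_uniq.
  have s2 : {subset F0 <= S2}.
    by move=> x /s0 hx; rewrite mem_undup mem_cat hx orbT.
  have hS2 := H0 S2 u2 s2.
  rewrite -rmorph_sum -rmorphB nr_real in hS2.
  have split2 : \sum_(i <- S2) nr (f i) ^+ 2 = \sum_(i <- S0) nr (f i) ^+ 2 +
       \sum_(i <- S | i \notin S0) nr (f i) ^+ 2.
    have e3 : \sum_(i <- S2 | i \notin S0) nr (f i) ^+ 2 =
              \sum_(i <- S | i \notin S0) nr (f i) ^+ 2.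
      rewrite -[LHS]big_filter -[RHS]big_filter; apply: sum_perm_memR.
      - exact: filter_uniq.
      - exact: filter_uniq.
      move=> x; rewrite !mem_filter [x \in S2]mem_undup mem_cat; case: (x \in S0); rewrite ?orbF ?orbT //.
    rewrite [LHS](bigID (mem S0)) /= sum_subR // ?e3 //.
    by move=> x hx; rewrite mem_undup mem_cat hx orbT.
  have -> : \sum_(i <- S) nr (tail S0 f i) ^+ 2 =
            \sum_(i <- S | i \notin S0) nr (f i) ^+ 2.
    rewrite (bigID (mem S0)) /= big1 ?add0r; last first.
      by move=> i hi; rewrite /tail hi nr0 expr0n.
    by apply: eq_bigr => i /negbTE hi; rewrite /tail hi.
  move: hS0 hS2; rewrite split2.
  set a := \sum_(i <- S0) _; set b := \sum_(i <- S | _) _.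
  move=> /ltr_normlP [h1 h2] /ltr_normlP [h3 h4].
  lra.
have [s hs2 hsd] := hs_nn_bounded (fun i => exprn_ge0 2 (nr_ge0 (tail S0 f i))) bnd.
have lt : l2 (tail S0 f).
  by exists (cr s); apply: hs_ext hs2 => i; rewrite mulJ.
exists S0; split => //.
have [e2 _] := l2_n2 lt.
have hs3 : has_sum (fun i => cr (nr (tail S0 f i) ^+ 2)) (ip (tail S0 f) (tail S0 f)).
  by apply: hs_ext (ip_hs lt lt) => i; rewrite mulJ.
by rewrite /n2 (hs_unique hs3 hs2).
Qed.

Lemma lc_split S f : lc 1 (trunc S f) (tail S f) = f.
Proof.
apply: funext => m; rewrite /lc /trunc /tail mul1r.
by case: (m \in S); rewrite ?addr0 ?add0r.
Qed.

Lemma density (L : (I -> C) -> C) :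
  (forall a f g, l2 f -> l2 g -> L (lc a f g) = a^* * L f + L g) ->
  (forall k, L (monoI k) = 0) ->
  (forall e : R, 0 < e -> exists2 d : R, 0 < d &
      forall r, l2 r -> n2 r <= d -> nr (L r) <= e) ->
  forall f, l2 f -> L f = 0.
Proof.
move=> Llin Lm Lc f lf.
have z2 : l2 (fun _ : I => (0 : C)) by apply: (@l2_fin _ [::]).
have L0 : L (fun _ => 0) = 0.
  have := Llin 1 _ _ z2 z2.
  have -> : lc 1 (fun _ : I => (0 : C)) (fun _ => 0) = (fun _ => 0).
    by apply: funext => m; rewrite /lc mulr0 addr0.
  rewrite conjC1 mul1r => h; apply: (@addrI _ (L (fun _ => 0))); rewrite addr0 -h.
  done.
have Ltr : forall S, uniq S -> L (trunc S f) = 0.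
  elim=> [|k S IH] /=.
    move=> _; rewrite -L0; congr L; apply: funext => m //.
  move=> /andP [kS uS].
  have -> : trunc (k :: S) f = lc (f k) (monoI k) (trunc S f).
    apply: funext => m; rewrite /trunc /lc /monoI inE.
    case: (eqVneq m k) => [->|mk] /=.
      by rewrite (negbTE kS) mulr1 addr0.
    by rewrite mulr0 add0r.
  rewrite Llin; [|exact: l2_mono|exact: l2_trunc].
  by rewrite (IH uS) addr0; have := Lm k; move=> ->; rewrite mulr0.
apply: nr_small => e e0.
have e2 : 0 < e / 2 by rewrite divr_gt0.
have [d d0 hd] := Lc _ e2.
have [S0 [u0 lt nt]] := tail_small lf d0.
rewrite -(lc_split S0 f) Llin; [|exact: l2_trunc|exact: lt].
rewrite (Ltr S0 u0) mulr0 add0r.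
apply: le_lt_trans (hd _ lt nt) _.
by rewrite ltr_pdivrMr ?ltr0n // ltr_pMr ?ltr1n.
Qed.

End L2.


Section Reindex.
Variable R : realType.
Local Notation C := (R[i]).
Local Notation cr x := (((x : R)%:C)%C : C).

Lemma l2_bound (I : choiceType) (f : I -> C) (B : R) :
  (forall S, uniq S -> \sum_(i <- S) nr (f i) ^+ 2 <= B) -> l2 f /\ n2 f <= B.
Proof.
move=> hB.
have [s hs sB] := hs_nn_bounded (fun i => exprn_ge0 2 (nr_ge0 (f i))) hB.
have lf : l2 f by exists (cr s); apply: hs_ext hs => i; rewrite mulJ.
split => //.
have hs3 : has_sum (fun i => cr (nr (f i) ^+ 2)) (ip f f).
  by apply: hs_ext (ip_hs lf lf) => i; rewrite mulJ.
by rewrite /n2 (hs_unique hs3 hs).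
Qed.

Lemma l2_inj (J I : choiceType) (h : J -> I) (f : I -> C) :
  injective h -> l2 f -> l2 (fun j => f (h j)) /\ n2 (fun j => f (h j)) <= n2 f.
Proof.
move=> ih lf; have [_ bf] := l2_n2 lf; apply: l2_bound => S uS.
rewrite -(big_map h predT (fun i => nr (f i) ^+ 2)); apply: bf.
by rewrite map_inj_uniq.
Qed.

Lemma prod_hs (I : choiceType) (u v : I -> C) : l2 u -> l2 v ->
  exists s, has_sum (fun k => u k * v k) s.
Proof.
move=> lu lv; have [_ bu] := l2_n2 lu; have [_ bv] := l2_n2 lv.
have hB : forall S, uniq S -> \sum_(i <- S) nr (u i * v i) <= (1 * n2 u + n2 v / 1) / 2.
  move=> S uS.
  apply: (@le_trans _ _ (\sum_(i <- S) (1 * nr (u i) ^+ 2 + nr (v i) ^+ 2 / 1) / 2)).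
    by apply: ler_sum => i _; rewrite nrM; apply: amgm.
  rewrite -mulr_suml big_split /= -mulr_sumr -mulr_suml.
  rewrite ler_pM2r ?invr_gt0 ?ltr0n //.
  apply: lerD; first by rewrite ler_pM2l //; apply: bu.
  by rewrite ler_pM2r ?invr_gt0 //; apply: bv.
have [s [hs _]] := asum_hs hB.
by exists s.
Qed.

Lemma hs_reindex (J I : choiceType) (h : J -> I) (g : I -> J) (P : pred I)
    (G : I -> C) s :
  injective h -> (forall j, P (h j)) -> (forall i, P i -> h (g i) = i) ->
  (forall i, ~~ P i -> G i = 0) ->
  has_sum G s -> has_sum (fun j => G (h j)) s.
Proof.
move=> ih Ph hg G0 /hsP hs; apply/hsP => e e0.
have [F0 H0] := hs e e0.
exists (map g (seq.filter P F0)) => S uS sS.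
set S' := map h S ++ seq.filter (predC P) (undup F0).
have uS' : uniq S'.
  rewrite cat_uniq map_inj_uniq // uS filter_uniq ?undup_uniq // andbT /=.
  apply/hasPn => x; rewrite mem_filter => /andP [/= nPx _].
  by apply/negP => /mapP [j _ ej]; move: nPx; rewrite ej Ph.
have sub : {subset F0 <= S'}.
  move=> x hx; rewrite mem_cat; case: (boolP (P x)) => px.
    have : g x \in S by apply: sS; apply: map_f; rewrite mem_filter px.
    by move=> /(map_f h); rewrite hg // => ->.
  by rewrite mem_filter mem_undup /= px hx orbT.
have := H0 S' uS' sub.
rewrite big_cat /= big_map [X in _ + X - _]big1_seq ?addr0 //.
by move=> i /andP [_]; rewrite mem_filter => /andP [/G0].
Qed.

End Reindex.

Section Toep.
Variable R : realType.
Local Notation C := (R[i]).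
Local Notation cr x := (((x : R)%:C)%C : C).
Variable d : nat.
Variable phi : zind d -> C.

Definition iota (k : mind d) : zind d := [ffun i => (k i)%:Z].
Definition kap (n : zind d) : mind d := [ffun i => absz (n i)].
Definition Pz (n : zind d) : bool := [forall i, (0 <= n i)%R].
Definition ext (f : Hfun R d) : zind d -> C :=
  fun n => if Pz n then f (kap n) else 0.

Lemma iota_inj : injective iota.
Proof.
move=> k1 k2 /ffunP h; apply/ffunP => i; have := h i; rewrite !ffunE.
by case.
Qed.

Lemma Pz_iota k : Pz (iota k).
Proof. by apply/forallP => i; rewrite ffunE. Qed.

Lemma kap_iota k : kap (iota k) = k.
Proof. by apply/ffunP => i; rewrite !ffunE. Qed.

Lemma iota_kap n : Pz n -> iota (kap n) = n.
Proof.
move=> /forallP h; apply/ffunP => i; rewrite !ffunE.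
by rewrite gez0_abs //; apply: h.
Qed.

Lemma ext_iota f k : ext f (iota k) = f k.
Proof. by rewrite /ext Pz_iota kap_iota. Qed.

Lemma zdiff_iota l k : zdiff (iota l) (iota k) = mdiff l k.
Proof. by apply/ffunP => i; rewrite !ffunE. Qed.

Lemma zdiff_inj (m : zind d) : injective (zdiff m).
Proof.
move=> n1 n2 /ffunP h; apply/ffunP => i; have := h i; rewrite !ffunE.
by move=> /addrI /oppr_inj.
Qed.

Lemma mdiff_inj (l : mind d) : injective (mdiff l).
Proof.
move=> n1 n2 /ffunP h; apply/ffunP => i; have := h i; rewrite !ffunE.
by move=> /addrI /oppr_inj [].
Qed.

Definition z0 : zind d := [ffun _ => 0%R].

Lemma zdiff0 (m : zind d) : zdiff m z0 = m.
Proof. by apply/ffunP => i; rewrite !ffunE subr0. Qed.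

Lemma phi_l2 : Linf_coeffs phi -> l2 phi.
Proof.
move=> [M hM]; have [h _] := hM _ (l2_mono _ z0).
have -> : phi = laurent phi (monoI _ z0) => //.
apply: funext => m; rewrite /laurent (sumv_single (k := z0)).
  by rewrite /monoI eqxx mulr1 zdiff0.
by move=> n /negbTE hn; rewrite /monoI hn mulr0.
Qed.

Lemma l2_ext f : l2 f -> l2 (ext f) /\ n2 (ext f) <= n2 f.
Proof.
move=> lf; have [_ bf] := l2_n2 lf; apply: l2_bound => S uS.
rewrite (bigID Pz) /= [X in _ + X]big1 ?addr0; last first.
  by move=> i /negbTE hi; rewrite /ext hi nr0 expr0n.
rewrite -big_filter.
have -> : \sum_(i <- seq.filter Pz S) nr (ext f i) ^+ 2 =
          \sum_(k <- map kap (seq.filter Pz S)) nr (f k) ^+ 2.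
  rewrite big_map big_seq_cond [RHS]big_seq_cond; apply: eq_bigr => i.
  by rewrite andbT mem_filter /ext => /andP [-> _].
apply: bf; rewrite map_inj_in_uniq ?filter_uniq //.
move=> x y; rewrite !mem_filter => /andP [px _] /andP [py _] e.
by rewrite -(iota_kap px) -(iota_kap py) e.
Qed.

Lemma toep_hs f l : Linf_coeffs phi -> l2 f ->
  has_sum (fun k => phi (mdiff l k) * f k) (toeplitz phi f l).
Proof.
move=> hphi lf.
have [lp _] := l2_inj (@mdiff_inj l) (phi_l2 hphi).
have [s hs] := prod_hs lp lf.
by rewrite /toeplitz (sumvE hs).
Qed.

Lemma toep_lin a f g : Linf_coeffs phi -> l2 f -> l2 g ->
  toeplitz phi (lc a f g) = lc a (toeplitz phi f) (toeplitz phi g).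
Proof.
move=> hphi lf lg; apply: funext => l; rewrite {1}/toeplitz; apply: sumvE.
apply: hs_ext (hs_lc a (toep_hs l hphi lf) (toep_hs l hphi lg)) => k.
by rewrite /lc; ring.
Qed.

Lemma toep_laurent f l : Linf_coeffs phi -> l2 f ->
  laurent phi (ext f) (iota l) = toeplitz phi f l.
Proof.
move=> hphi lf.
have [lp _] := l2_inj (@zdiff_inj (iota l)) (phi_l2 hphi).
have [le _] := l2_ext lf.
have [s hs] := prod_hs lp le.
have G0 : forall n, ~~ Pz n -> phi (zdiff (iota l) n) * ext f n = 0.
  by move=> n hn; rewrite /ext (negbTE hn) mulr0.
have hs2 := hs_reindex iota_inj Pz_iota iota_kap G0 hs.
rewrite /laurent (sumvE hs) /toeplitz; apply/esym/sumvE.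
by apply: hs_ext hs2 => k; rewrite zdiff_iota ext_iota.
Qed.

Lemma toep_bound : Linf_coeffs phi -> exists2 M : R, 0 <= M &
  forall f, l2 f -> l2 (toeplitz phi f) /\ n2 (toeplitz phi f) <= M * n2 f.
Proof.
move=> hphi; have [M hM] := hphi.
exists (Num.max M 0); first by rewrite le_max lexx orbT.
move=> f lf.
have [le ne] := l2_ext lf.
have [lL hL] := hM _ le.
have [eL _] := l2_n2 lL; have [ee _] := l2_n2 le.
rewrite eL ee -rmorphM lecR in hL.
have hT : toeplitz phi f = fun l => laurent phi (ext f) (iota l).
  by apply: funext => l; rewrite toep_laurent.
have [lT nT] := l2_inj iota_inj lL.
rewrite hT; split => //.
apply: (le_trans nT); apply: (le_trans hL).
have n0 := n2_ge0 le.
apply: (@le_trans _ _ (Num.max M 0 * n2 (ext f))).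
  by rewrite ler_wpM2r // le_max lexx.
by rewrite ler_wpM2l // le_max lexx orbT.
Qed.

End Toep.


Section Main.
Variable R : realType.
Local Notation C := (R[i]).
Local Notation cr x := (((x : R)%:C)%C : C).
Variable d : nat.

Lemma ipm_r (f : Hfun R d) k : ip f (mono R k) = f k.
Proof. exact: ip_mono_r. Qed.

Lemma l2m k : H2 (mono R k : Hfun R d).
Proof. exact: l2_mono. Qed.

Lemma Jmono k : Jcan (mono R k : Hfun R d) = mono R k.
Proof. by apply: funext => m; rewrite /Jcan /mono conjC_nat. Qed.

Lemma l2J (f : Hfun R d) : H2 f -> H2 (Jcan f).
Proof.
move=> [s hs]; exists s; apply: hs_ext hs => k.
by rewrite /Jcan conjCK mulrC.
Qed.

Lemma ipJ (f g : Hfun R d) : ip (Jcan f) (Jcan g) = ip g f.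
Proof.
rewrite ip_sym /ip -sumv_conj; congr sumv; apply: funext => k.
by rewrite /Jcan rmorphM /= !conjCK.
Qed.

Lemma toep_mono (phi : zind d -> C) l k :
  toeplitz phi (mono R l) k = phi (mdiff k l).
Proof.
rewrite /toeplitz (sumv_single (k := l)) /mono ?eqxx ?mulr1 //.
by move=> m /negbTE ->; rewrite mulr0.
Qed.

End Main.


End HelpersTh.
Import HelpersTh.

Theorem theorem7p5 (R : realType) (d : nat) (phi : zind d -> R[i])
    (Cj U : Hfun R d -> Hfun R d) :
  (2 <= d)%N ->
  Linf_coeffs phi ->
  conjugation Cj ->
  unitary U ->
  (forall f, H2 f -> Cj f = U (Jcan f)) ->
  (C_symmetric Cj (toeplitz phi) <->
     (forall k l : mind d,
        phi (mdiff k l) = ip (toeplitz phi (Cj (mono R k))) (Cj (mono R l))))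
  /\
  ((forall k l : mind d,
        phi (mdiff k l) = ip (toeplitz phi (Cj (mono R k))) (Cj (mono R l))) <->
     (exists2 Us, is_adjoint U Us &
        forall k l : mind d,
          phi (mdiff k l) = ip (Us (toeplitz phi (U (mono R k)))) (mono R l))).
Proof.
move=> _ hphi [CH Canti Cinv Ciso] [UH Ulin Uip Usurj] hCU.
have m2 : forall k, H2 (mono R k : Hfun R d) := fun k => @l2m R d k.
set T := toeplitz phi.
have [M M0 hT] := toep_bound hphi.
have TH : forall f, H2 f -> H2 (T f) by move=> f /hT [].
have CM : forall k, Cj (mono R k) = U (mono R k).
  by move=> k; rewrite (hCU _ (m2 k)) Jmono.
have ipC : forall f g, H2 f -> H2 g -> ip (Cj f) (Cj g) = ip g f.
  by move=> f g hf hg; rewrite (hCU _ hf) (hCU _ hg) (Uip _ _ (l2J hf) (l2J hg)) ipJ.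
have n2C : forall f, H2 f -> n2 (Cj f) = n2 f.
  by move=> f hf; rewrite /n2 ipC.
split.
  split.
    move=> [S [SH adj] hS] k l.
    have hk : H2 (Cj (mono R k)) by apply: (CH); apply: (m2).
    rewrite -(hS _ hk) Cinv ?m2 // ipC ?m2 //; last by apply: (SH); apply: (m2).
    by rewrite -adj ?m2 // ipm_r /T toep_mono.
  move=> h2.
  exists (fun g => Cj (T (Cj g))).
    split; first by move=> g hg; apply: (CH); apply: (TH); apply: (CH).
    move=> f g hf hg; apply/eqP; rewrite -subr_eq0; apply/eqP; move: g hg.
    apply: (density (L := fun g => ip (T f) g - ip f (Cj (T (Cj g))))).
    - move=> a g1 g2 h1 h2'.
      have c1 := CH _ h1; have c2 := CH _ h2'.
      have t1 := TH _ c1; have t2 := TH _ c2.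
      rewrite Canti // /T toep_lin // -/T Canti //.
      rewrite ip_lcr; [|exact: h1|exact: h2'|exact: TH _ hf].
      rewrite ip_lcr; [|exact: CH _ t1|exact: CH _ t2|exact: hf].
      rewrite conjCK; ring.
    - move=> l /=; rewrite ipm_r.
      have -> : Cj (T (Cj (mono R l))) = fun k => (phi (mdiff l k))^*.
        apply: funext => k.
        have hl : H2 (T (Cj (mono R l))) by apply: (TH); apply: (CH); apply: (m2).
        rewrite -[LHS](ipm_r (Cj (T (Cj (mono R l))))).
        rewrite -[mono R k in LHS]Cinv ?m2 // ipC //; last by apply: (CH); apply: (m2).
        by rewrite ip_sym -h2.
      rewrite /ip /T /toeplitz; apply/eqP; rewrite subr_eq0; apply/eqP.
      by congr sumv; apply: funext => k; rewrite conjCK mulrC.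
    - move=> e e0.
      set A := n2 (T f); set B := n2 f.
      have A0 : 0 <= A by apply: n2_ge0; apply: (TH).
      have B0 : 0 <= B by apply: n2_ge0.
      set t := e / (A + B + 1).
      have ABp : 0 < A + B + 1 by apply: ltr_wpDl; [exact: addr_ge0|exact: ltr01].
      have Mp : 0 < M + 1 by apply: ltr_wpDl; [exact: M0|exact: ltr01].
      have t0 : 0 < t by apply: divr_gt0.
      exists (e * t / (M + 1)).
        by apply: divr_gt0 => //; apply: mulr_gt0.
      move=> r hr nr_le.
      have hCr := CH _ hr.
      have hTCr := TH _ hCr.
      have [_ b1] := ip_bound (TH _ hf) hr t0.
      have [_ b2] := ip_bound hf (CH _ hTCr) t0.
      rewrite n2C // in b2.
      have [_ b3] := hT _ hCr.
      rewrite n2C // -/T in b3.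
      rewrite -/A -/B in b1 b2.
      have ht1 : t * (A + B) <= e.
        rewrite /t mulrAC ler_pdivrMr //.
        by rewrite ler_pM2l // lerDl.
      have r0 := n2_ge0 hr.
      have ht2 : (1 + M) * (n2 r / t) <= e.
        apply: (@le_trans _ _ ((1 + M) * ((e * t / (M + 1)) / t))).
          by rewrite ler_wpM2l ?addr_ge0 // ler_wpM2r // invr_ge0 ltW.
        have ee : (1 + M) * (e * t / (M + 1) / t) = e.
          by field; rewrite !gt_eqF // addrC.
        by rewrite ee.
      have ht3 : n2 (T (Cj r)) / t <= M * (n2 r / t).
        by rewrite mulrA ler_wpM2r // invr_ge0 ltW.
      apply: (le_trans (nrD _ _)); rewrite nrN.
      set u := n2 r / t in ht2 ht3.
      set v := n2 (T (Cj r)) / t in ht3.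
      have ea : (t * A + n2 r / t) / 2 = (t * A + u) / 2 by [].
      rewrite ea in b1.
      have eb : (t * B + n2 (T (Cj r)) / t) / 2 = (t * B + v) / 2 by [].
      rewrite eb in b2.
      set x := nr _ in b1; set y := nr _ in b2.
      have : t * (A + B) = t * A + t * B by ring.
      have : (1 + M) * u = u + M * u by ring.
      lra.
  move=> f hf; rewrite (Cinv _ hf); apply: Cinv; exact: (TH _ hf).
split.
  move=> h2.
  pose Us := fun (g : Hfun R d) (m : mind d) => ip g (U (mono R m)).
  have UsU : forall h, H2 h -> Us (U h) = h.
    move=> h hh; apply: funext => m; rewrite /Us Uip ?m2 //.
    exact: ipm_r.
  exists Us.
    split.
      by move=> g /Usurj [h hh <-]; rewrite UsU.
    by move=> f g hf /Usurj [h hh <-]; rewrite UsU // Uip.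
  move=> k l; rewrite h2 !CM.
  by rewrite ipm_r.
move=> [Us [UsH adj] h3] k l.
rewrite !CM h3.
have hX : H2 (T (U (mono R k))) by apply: (TH); apply: (UH); apply: (m2).
rewrite ipm_r -[in RHS](conjCK (ip _ _)) -ip_sym adj ?m2 //.
by rewrite ip_sym conjCK ipm_r.
Qed.
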